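(* Let $g\in C^1$ be a Riemannian metric on $\mathbb{R}^D$ written as $g_x(u,u)=u^{\top}H(x)u$, with $c_1\|u\|_2^2\le g_x(u,u)$ for all $x,u$ (some $c_1>0$) and $\|H(x)-H(y)\|_{\mathcal{B}}\le L_H\|x-y\|_2$ for all $x,y$. Then for all $i,j,k$ and all $x$, $$|\Gamma^k_{ij}(x)|\le\frac{3L_HD^{1/2}}{2c_1}.$$
   Context: $g_{ij}=H_{ij}$, $(g^{ij})$ is the inverse matrix of $(g_{ij})$, and the Christoffel symbols are $\Gamma^k_{ij}=\frac12\sum_{\ell=1}^D g^{k\ell}\left(\frac{\partial g_{\ell j}}{\partial x_i}+\frac{\partial g_{i\ell}}{\partial x_j}-\frac{\partial g_{ij}}{\partial x_\ell}\right)$. $\|\cdot\|_{\mathcal{B}}$ is the operator norm. *)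

(* Defs.v *)
From HB Require Import structures.
From mathcomp Require Import all_boot all_order all_algebra.
From mathcomp Require Import all_classical all_reals all_analysis.
Set Implicit Arguments. Unset Strict Implicit. Unset Printing Implicit Defensive.
Import Order.TTheory GRing.Theory Num.Theory.
Import numFieldNormedType.Exports.
Local Open Scope classical_set_scope.
Local Open Scope ring_scope.

Definition norm2 {R : realType} {n : nat} (v : 'cV[R]_n) : R :=
  Num.sqrt (\sum_(i < n) v i 0 ^+ 2).

(* Euclidean norm of a row vector (points of R^D). *)
Definition rnorm2 {R : realType} {n : nat} (v : 'rV[R]_n) : R :=
  Num.sqrt (\sum_(i < n) v 0 i ^+ 2).

Definition opnorm {R : realType} {n : nat} (A : 'M[R]_n) : R :=
  sup [set r | exists v : 'cV[R]_n, norm2 v <= 1 /\ r = norm2 (A *m v)].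

Definition basisv {R : realType} {n : nat} (i : 'I_n) : 'rV[R]_n :=
  delta_mx 0 i.

Definition pderiv {R : realType} {n : nat} (f : 'rV[R]_n -> R) (i : 'I_n)
  (x : 'rV[R]_n) : R := 'D_(basisv i) f x.

Definition christoffel {R : realType} {n : nat} (H : 'rV[R]_n -> 'M[R]_n)
  (k i j : 'I_n) (x : 'rV[R]_n) : R :=
  2^-1 * \sum_(l < n) invmx (H x) k l *
    (pderiv (fun y => H y l j) i x + pderiv (fun y => H y i l) j x
     - pderiv (fun y => H y i j) l x).

(* Main.v *)
Require Import Defs.
From HB Require Import structures.
From mathcomp Require Import all_boot all_order all_algebra.
From mathcomp Require Import all_classical all_reals all_analysis.
From mathcomp Require Import ring lra.
Import Order.TTheory GRing.Theory Num.Theory.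
Import numFieldNormedType.Exports.
Local Open Scope classical_set_scope.
Local Open Scope ring_scope.
Set Implicit Arguments. Unset Strict Implicit.

Lemma coord_le_norm2 (R : realType) n (v : 'cV[R]_n) j : `|v j 0| <= norm2 v.
Proof.
rewrite /norm2 -sqrtr_sqr; apply: ler_wsqrtr.
rewrite (bigD1 j) //= lerDl; apply: sumr_ge0 => i _; exact: sqr_ge0.
Qed.

Lemma opnorm_ub (R : realType) n (A : 'M[R]_n) :
  has_ubound [set r | exists v : 'cV[R]_n, norm2 v <= 1 /\ r = norm2 (A *m v)].
Proof.
exists (Num.sqrt (\sum_i (\sum_j `|A i j|) ^+ 2)) => _ [v [hv ->]].
rewrite /norm2; apply: ler_wsqrtr; apply: ler_sum => i _.
rewrite -[X in X <= _]ger0_norm ?sqr_ge0 // normrX.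
rewrite ler_sqr ?nnegrE ?sumr_ge0 //.
rewrite mxE; apply: le_trans; first exact: ler_norm_sum.
apply: ler_sum => j _.
rewrite normrM; apply: ler_piMr => //; exact: le_trans (coord_le_norm2 v j) hv.
Qed.

Lemma entry_le_opnorm (R : realType) n (A : 'M[R]_n) a b : `|A a b| <= opnorm A.
Proof.
have hd : norm2 (delta_mx b 0 : 'cV[R]_n) = 1.
  rewrite /norm2 (bigD1 b) //= big1 ?addr0; last first.
    by move=> i /negbTE hi; rewrite mxE hi /= expr0n.
  by rewrite mxE !eqxx /= expr1n sqrtr1.
have -> : A a b = (A *m (delta_mx b 0 : 'cV[R]_n)) a 0.
  rewrite mxE (bigD1 b) //= big1 ?addr0; last first.
    by move=> i /negbTE hi; rewrite mxE hi /= mulr0.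
  by rewrite mxE !eqxx mulr1.
apply: le_trans (coord_le_norm2 _ _) _.
apply: (ub_le_sup (opnorm_ub A)).
by exists (delta_mx b 0); rewrite hd.
Qed.

Lemma rnorm2_basis (R : realType) n (l : 'I_n) (h : R) :
  rnorm2 (h *: basisv l) = `|h|.
Proof.
rewrite /rnorm2 (bigD1 l) //= big1 ?addr0; last first.
  by move=> i /negbTE hi; rewrite !mxE hi andbF /= mulr0 expr0n.
by rewrite !mxE !eqxx /= mulr1 sqrtr_sqr.
Qed.

Lemma pderiv_bound (R : realType) n (H : 'rV[R]_n -> 'M[R]_n) LH a b l x :
  (forall x y, opnorm (H x - H y) <= LH * rnorm2 (x - y)) ->
  differentiable (fun y => H y a b) x ->
  `|pderiv (fun y => H y a b) l x| <= LH.
Proof.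
move=> hL hd; set f := fun y => H y a b.
have dv : derivable f x (basisv l) by exact: diff_derivable.
have key : \forall h \near 0^', `|h^-1 *: ((f \o shift x) (h *: basisv l) - f x)| <= LH.
  apply: filterS (nbhs_dnbhs_neq (0:R)) => h h0.
  rewrite /= /f normrZ normfV.
  rewrite ler_pdivrMl ?normr_gt0 //.
  have -> : H (h *: basisv l + x) a b - H x a b = (H (h *: basisv l + x) - H x) a b by rewrite !mxE.
  apply: le_trans (entry_le_opnorm _ a b) _.
  by apply: le_trans (hL _ _) _; rewrite addrK rnorm2_basis mulrC.
rewrite ler_norml; apply/andP; split.
  apply: limr_ge => //; apply: filterS key => h; rewrite ler_norml => /andP[] //.
apply: limr_le => //; apply: filterS key => h; rewrite ler_norml => /andP[] //.
Qed.

Lemma amgm (R : realType) (a b c : R) : 0 < c -> a * b <= c / 2 * a ^+ 2 + b ^+ 2 / (2 * c).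
Proof.
move=> c0; rewrite -subr_ge0.
have -> : c / 2 * a ^+ 2 + b ^+ 2 / (2 * c) - a * b = (c * a - b) ^+ 2 / (2 * c).
  by field; rewrite gt_eqF.
by rewrite divr_ge0 ?sqr_ge0 // mulr_ge0 // ltW.
Qed.

Theorem proposition7p10 (R : realType) (D : nat) (H : 'rV[R]_D -> 'M[R]_D)
  (c1 LH : R) :
  (* g is a C^1 Riemannian metric: H(x) symmetric, entries C^1 *)
  (forall x, (H x)^T = H x) ->
  (forall (a b : 'I_D) x, differentiable (fun y => H y a b) x) ->
  (forall (a b l : 'I_D), continuous (pderiv (fun y => H y a b) l)) ->
  0 < c1 ->
  (forall x (u : 'cV[R]_D), c1 * norm2 u ^+ 2 <= (u^T *m H x *m u) 0 0) ->
  (forall x y, opnorm (H x - H y) <= LH * rnorm2 (x - y)) ->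
  forall (i j k : 'I_D) x,
    `|christoffel H k i j x| <= 3 * LH * Num.sqrt (D%:R) / (2 * c1).
Proof.
move=> hsym hdiff hcont c1pos hpd hL i j k x.
have hbd a b l : `|pderiv (fun y => H y a b) l x| <= LH := pderiv_bound l hL (hdiff a b x).
have LH0 : 0 <= LH := le_trans (normr_ge0 _) (hbd i i i).
set w : 'cV[R]_D := \col_l (pderiv (fun y => H y l j) i x
   + pderiv (fun y => H y i l) j x - pderiv (fun y => H y i j) l x).
have hw l : w l 0 ^+ 2 <= (3 * LH) ^+ 2.
  rewrite -[X in X <= _]ger0_norm ?sqr_ge0 // normrX ler_sqr ?nnegrE ?normr_ge0 ?mulr_ge0 //.
  have := hbd l j i; have := hbd i l j; have := hbd i j l.
  rewrite mxE !ler_norml => /andP[? ?] /andP[? ?] /andP[? ?].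
  apply/andP; split; lra.
have sqn (v : 'cV[R]_D) : norm2 v ^+ 2 = \sum_l v l 0 ^+ 2.
  by rewrite /norm2 sqr_sqrtr // sumr_ge0 // => l _; rewrite sqr_ge0.
have unit : H x \in unitmx.
  rewrite unitmxE unitfE; apply/negP => /det0P [v v0 hv].
  have := hpd x v^T; rewrite trmxK hv mul0mx mxE sqn => hle.
  have hs : \sum_l v^T l 0 ^+ 2 = 0.
    apply/eqP; rewrite eq_le sumr_ge0 ?andbT; last by move=> l _; rewrite sqr_ge0.
    by rewrite -(pmulr_rle0 _ c1pos).
  move/negP: v0; apply; apply/eqP/rowP => l; rewrite mxE.
  have := @psumr_eq0P _ _ xpredT (fun l => v^T l 0 ^+ 2) (fun l _ => sqr_ge0 _) hs l isT.
  by rewrite mxE => /eqP; rewrite sqrf_eq0 => /eqP.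
set z := invmx (H x) *m w.
have hz : H x *m z = w by rewrite /z mulKVmx.
have chr : christoffel H k i j x = 2^-1 * z k 0.
  by rewrite /christoffel /z mxE; congr (_ * _); apply: eq_bigr => l _; rewrite mxE.
have q : (z^T *m H x *m z) 0 0 = \sum_l z l 0 * w l 0.
  by rewrite -mulmxA hz mxE; apply: eq_bigr => l _; rewrite mxE.
set Sz := \sum_l z l 0 ^+ 2.
set Sw := \sum_l w l 0 ^+ 2.
have h1 : c1 * Sz <= c1 / 2 * Sz + Sw / (2 * c1).
  have := hpd x z; rewrite q sqn => /le_trans; apply.
  rewrite /Sz /Sw mulr_sumr mulr_suml -big_split /=; apply: ler_sum => l _.
  exact: amgm.
have h2 : Sz * c1 ^+ 2 <= Sw.
  have e : Sw / (2 * c1) * (2 * c1) = Sw by field; rewrite gt_eqF.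
  nra.
have h3 : Sw <= D%:R * (3 * LH) ^+ 2.
  apply: le_trans (ler_sum _ (fun l _ => hw l)) _.
  by rewrite sumr_const card_ord -(mulr_natl ((3 * LH) ^+ 2)).
have h4 : z k 0 ^+ 2 <= Sz.
  rewrite /Sz (bigD1 k) //= lerDl sumr_ge0 // => l _; exact: sqr_ge0.
have sD : Num.sqrt (D%:R : R) ^+ 2 = D%:R by rewrite sqr_sqrtr.
have sD0 : 0 <= Num.sqrt (D%:R : R) by [].
have h5 : `|z k 0| * c1 <= 3 * LH * Num.sqrt D%:R.
  have c0 : 0 <= c1 by exact: ltW.
  rewrite -ler_sqr ?nnegrE ?mulr_ge0 //.
  rewrite exprMn -normrX ger0_norm ?sqr_ge0 // exprMn sD; nra.
rewrite chr normrM ger0_norm ?invr_ge0 //.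
rewrite ler_pdivlMr ?mulr_gt0 //.
have e : 2^-1 * `|z k 0| * (2 * c1) = `|z k 0| * c1 by field.
by rewrite e.
Qed.
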